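(* Let $\mathbb P$ be a Bernoulli measure on $\partial\mathcal M$, $f(x)=\mathbb P({\uparrow}x)$ for $x\in\mathcal M$, and let $B=(B_{\gamma,\gamma'})_{\gamma,\gamma'\in\mathfrak C}$ be the non-negative matrix with $B_{\gamma,\gamma'}=f(\gamma')$ if $\gamma\to\gamma'$ and $B_{\gamma,\gamma'}=0$ otherwise. Then the spectral radius of $B$ equals $1$.
   Context: Let $\Sigma$ be a finite set with at least two elements and $I\subseteq\Sigma\times\Sigma$ a symmetric irreflexive relation such that $(\Sigma,(\Sigma\times\Sigma)\setminus I)$ is connected. The heap monoid $\mathcal M=\mathcal M(\Sigma,I)$ is $\Sigma^*$ modulo the smallest congruence containing $(ab,ba)$ for $(a,b)\in I$; $\cdot$ is concatenation, $0$ the empty heap. $x\le y$ iff $y=x\cdot z$ for some $z$. Cliques are heaps formed by distinct pairwise independent pieces; $\mathfrak C$ the nonempty ones; $\gamma\to\gamma'$ iff each piece of $\gamma'$ is dependent (not in $I$) on some piece of $\gamma$. Every nonempty heap has a unique Cartier–Foata decomposition $\gamma_1\cdots\gamma_n$ with $\gamma_i\in\mathfrak C$, $\gamma_i\to\gamma_{i+1}$. The boundary $\partial\mathcal M$ is the set of infinite sequences $(\gamma_n)_{n\ge1}$ of nonempty cliques with $\gamma_n\to\gamma_{n+1}$, ordered together with $\mathcal M$ by $\xi\le\xi'$ iff $\gamma_1\cdots\gamma_n\le\gamma'_1\cdots\gamma'_n$ for all $n$ (finite heaps padded with empty cliques). ${\uparrow}x=\{\xi\in\partial\mathcal M:x\le\xi\}$;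 $\mathcal F$ the generated $\sigma$-algebra. A Bernoulli measure is a probability $\mathbb P$ on $(\partial\mathcal M,\mathcal F)$ with $\mathbb P({\uparrow}(x\cdot y))=\mathbb P({\uparrow}x)\mathbb P({\uparrow}y)$ and $\mathbb P({\uparrow}x)>0$ for all $x,y$. *)

(* Defs.v *)
From Stdlib Require Import Reals.
From mathcomp Require Import all_boot.
Local Open Scope R_scope.

Set Implicit Arguments.
Unset Strict Implicit.
Unset Printing Implicit Defensive.

Inductive tequiv (S : finType) (I : rel S) : seq S -> seq S -> Prop :=
| te_refl u : tequiv I u u
| te_swap u w a b : I a b -> tequiv I (u ++ a :: b :: w) (u ++ b :: a :: w)
| te_sym u v : tequiv I u v -> tequiv I v u
| te_trans u v w : tequiv I u v -> tequiv I v w -> tequiv I u w.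

Definition hle (S : finType) (I : rel S) (x y : seq S) : Prop :=
  exists z, tequiv I y (x ++ z).

Definition is_clique (S : finType) (I : rel S) (c : {set S}) : bool :=
  (c != set0) && [forall a in c, forall b in c, (a != b) ==> I a b].

Definition arrow (S : finType) (I : rel S) (c c' : {set S}) : bool :=
  [forall b in c', exists a in c, ~~ I a b].

(* The clique gamma viewed as a heap (order of pieces irrelevant up to tequiv). *)
Definition clique_word (S : finType) (c : {set S}) : seq S := enum c.

(* Boundary: infinite sequences of nonempty cliques with gamma_n -> gamma_{n+1}. *)
Definition bnd_ok (S : finType) (I : rel S) (s : nat -> {set S}) : Prop :=
  forall n, is_clique I (s n) /\ arrow I (s n) (s n.+1).

Definition Bnd (S : finType) (I : rel S) := {s : nat -> {set S} | bnd_ok I s}.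

Definition bprefix (S : finType) (I : rel S) (xi : Bnd I) (n : nat) : seq S :=
  flatten [seq clique_word (proj1_sig xi k) | k <- iota 0 n].

Definition up (S : finType) (I : rel S) (x : seq S) (xi : Bnd I) : Prop :=
  exists n, hle I x (bprefix xi n).

Inductive meas (S : finType) (I : rel S) : (Bnd I -> Prop) -> Prop :=
| m_up (x : seq S) : meas (@up S I x)
| m_compl (A : Bnd I -> Prop) : meas A -> meas (fun xi => ~ A xi)
| m_union (A : nat -> Bnd I -> Prop) :
    (forall n, meas (A n)) -> meas (fun xi => exists n, A n xi)
| m_ext (A B : Bnd I -> Prop) : meas A -> (forall xi, A xi <-> B xi) -> meas B.
Arguments meas {S} I _.

Record is_probability (S : finType) (I : rel S) (P : (Bnd I -> Prop) -> R) : Prop := {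
  pr_ext : forall A B, meas I A -> (forall xi, A xi <-> B xi) -> P A = P B;
  pr_nonneg : forall A, meas I A -> Rle 0 (P A);
  pr_total : P (fun _ => True) = R1;
  pr_sigma : forall A : nat -> Bnd I -> Prop,
      (forall n, meas I (A n)) ->
      (forall n m xi, n <> m -> A n xi -> A m xi -> False) ->
      infinite_sum (fun n => P (A n)) (P (fun xi => exists n, A n xi))
}.

Definition bernoulli (S : finType) (I : rel S) (P : (Bnd I -> Prop) -> R) : Prop :=
  is_probability P /\
  (forall x y : seq S, P (@up S I (x ++ y)) = (P (@up S I x) * P (@up S I y))) /\
  (forall x : seq S, Rlt 0 (P (@up S I x))).

Definition cliques (S : finType) (I : rel S) : seq {set S} :=
  [seq c <- enum {: {set S}} | is_clique I c].

Definition Bmat (S : finType) (I : rel S) (P : (Bnd I -> Prop) -> R)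
  (c c' : {set S}) : R :=
  if arrow I c c' then P (@up S I (clique_word c')) else R0.

Definition Cx := (R * R)%type.
Definition C0 : Cx := (R0, R0).
Definition Cadd (z w : Cx) : Cx := ((z.1 + w.1), (z.2 + w.2)).
Definition Cmul (z w : Cx) : Cx :=
  ((z.1 * w.1 - z.2 * w.2), (z.1 * w.2 + z.2 * w.1)).
Definition Cscale (r : R) (z : Cx) : Cx := ((r * z.1), (r * z.2)).
Definition Cmod (z : Cx) : R := sqrt (z.1 * z.1 + z.2 * z.2).

Definition is_eigenvalue (S : finType) (I : rel S) (M : {set S} -> {set S} -> R)
  (lam : Cx) : Prop :=
  exists v : {set S} -> Cx,
    (exists c, is_clique I c /\ v c <> C0) /\
    forall c, is_clique I c ->
      foldr Cadd C0 [seq Cscale (M c c') (v c') | c' <- cliques I] = Cmul lam (v c).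

Definition spectral_radius_is (S : finType) (I : rel S) (M : {set S} -> {set S} -> R)
  (r : R) : Prop :=
  is_lub (fun t => exists lam, is_eigenvalue I M lam /\ t = Cmod lam) r.

(* Main.v *)
Require Import Defs.
From Stdlib Require Import Reals Classical Lra Psatz.
From mathcomp Require Import all_boot ssralg ssrnum Rstruct.
From Coquelicot Require Complex.
Set Implicit Arguments. Unset Strict Implicit. Unset Printing Implicit Defensive.

Section Trace.
Variable S : finType.
Variable I : rel S.
Hypothesis hsym : symmetric I.
Hypothesis hirr : irreflexive I.

Lemma te_catl p u v : tequiv I u v -> tequiv I (p ++ u) (p ++ v).
Proof.
elim=> [w|u0 w a b H|u0 v0 _ IH|u0 v0 w0 _ IH1 _ IH2].
- exact: te_refl.
- by rewrite !catA; apply: te_swap.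
- exact: te_sym.
- exact: te_trans IH2.
Qed.

Lemma te_catr q u v : tequiv I u v -> tequiv I (u ++ q) (v ++ q).
Proof.
elim=> [w|u0 w a b H|u0 v0 _ IH|u0 v0 w0 _ IH1 _ IH2].
- exact: te_refl.
- by rewrite -!catA /=; apply: te_swap.
- exact: te_sym.
- exact: te_trans IH2.
Qed.

Lemma te_cons a u v : tequiv I u v -> tequiv I (a :: u) (a :: v).
Proof. exact: (te_catl [:: a]). Qed.

Lemma te_front b u1 u2 : all (I b) u1 -> tequiv I (u1 ++ b :: u2) (b :: u1 ++ u2).
Proof.
elim: u1 => [|x u1 IH] /= H; first exact: te_refl.
case/andP: H => Hbx H.
apply: te_trans (te_cons x (IH H)) _.
have Hxb : I x b by rewrite hsym.
exact: (te_swap [::] (u1 ++ u2) Hxb).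
Qed.

Definition pind (u : seq S) := {in u &, forall a b, a != b -> I a b}.

Lemma te_perm u v : uniq u -> pind u -> perm_eq u v -> tequiv I u v.
Proof.
elim: v u => [|b v IH] u Hu Hp Hpe.
  by rewrite (perm_small_eq _ Hpe) //; apply: te_refl.
have bu : b \in u by rewrite (perm_mem Hpe) mem_head.
case/splitPr: bu Hu Hp Hpe => u1 u2 Hu Hp Hpe.
have H1 : all (I b) u1.
  apply/allP=> x xu1; apply: Hp; rewrite ?mem_cat ?xu1 ?inE ?eqxx ?orbT //.
  apply/eqP=> Hbx; move: Hu; rewrite cat_uniq /= => /and3P[_ /norP[] /negP + _ _].
  by rewrite Hbx.
apply: te_trans (te_front u2 H1) _.
apply: te_cons; apply: IH.
- by move: Hu; rewrite !cat_uniq /= => /and3P[-> /norP[_ ->] /andP[_ ->]].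
- move=> x y xu yu; apply: Hp.
  + by rewrite mem_cat inE; move: xu; rewrite mem_cat => /orP[]->; rewrite ?orbT.
  + by rewrite mem_cat inE; move: yu; rewrite mem_cat => /orP[]->; rewrite ?orbT.
- by rewrite -(perm_cons b); apply: perm_trans Hpe; by rewrite -[b :: _]cat1s perm_catCA.
Qed.


Definition fr a (w : seq S) := ohead [seq c <- w | ~~ I a c] == Some a.

Lemma fr_cat a x y : fr a (x ++ y) = if has (fun c => ~~ I a c) x then fr a x else fr a y.
Proof.
rewrite /fr filter_cat has_filter.
by case: [seq c <- x | ~~ I a c].
Qed.

Lemma fr_te a u v : tequiv I u v -> fr a u = fr a v.
Proof.
elim=> [w|u0 w x y H|u0 v0 _ IH|u0 v0 w0 _ IH1 _ IH2] //.
- rewrite !fr_cat; case: ifP => // _.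
  rewrite /fr /=.
  case Hx: (I a x); case Hy: (I a y) => //=.
  have xa : x != a by apply/eqP=> E; move: H; rewrite E Hy.
  have ya : y != a by apply/eqP=> E; move: H; rewrite E hsym Hx.
  by rewrite !(inj_eq (@Some_inj _)) (negbTE xa) (negbTE ya).
- by rewrite IH1.
Qed.

Lemma fr_head a z : fr a (a :: z).
Proof. by rewrite /fr /= hirr /=. Qed.

Lemma fr_split a w : fr a w -> exists u1 u2, w = u1 ++ a :: u2 /\ all (I a) u1.
Proof.
elim: w => [|c w IH] //.
rewrite /fr /=; case H: (I a c) => /=.
  by case/IH => u1 [u2 [-> Hu]]; exists (c :: u1), u2; rewrite /= H.
rewrite (inj_eq (@Some_inj _)) => /eqP ->.
by exists [::], w.
Qed.

Lemma hle1 a w : hle I [:: a] w <-> fr a w.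
Proof.
split.
  by case=> z H; rewrite (fr_te a H) fr_head.
case/fr_split=> u1 [u2 [-> H]]; exists (u1 ++ u2); exact: te_front.
Qed.

Lemma fr_mem a w : fr a w -> a \in w.
Proof. by case/fr_split=> u1 [u2 [-> _]]; rewrite mem_cat mem_head orbT. Qed.

Lemma fr_pind a w : a \in w -> (forall x, x \in w -> x != a -> I a x) -> fr a w.
Proof.
elim: w => [|c w IH] //; rewrite inE => Ha Hw.
case: (eqVneq c a) => [->|ca]; first exact: fr_head.
have Hac : I a c by apply: Hw; rewrite ?mem_head.
rewrite /fr /= Hac /=; apply: IH.
  by move: Ha; rewrite eq_sym (negbTE ca).
by move=> x xw; apply: Hw; rewrite inE xw orbT.
Qed.

Lemma fr_path c a p : a != c -> path (fun x y => ~~ I x y) a p -> fr c (a :: p) = false.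
Proof.
elim: p a => [|b p IH] a ac /=.
  by move=> _; rewrite /fr /=; case: (I c a) => //=; rewrite (inj_eq (@Some_inj _)) (negbTE ac).
case/andP=> Hab Hp.
rewrite /fr /=; case Hca: (I c a) => /=; last by rewrite (inj_eq (@Some_inj _)) (negbTE ac).
have bc : b != c by apply/eqP=> E; move: Hab; rewrite E hsym Hca.
exact: (IH b bc Hp).
Qed.

Lemma hle_te x y w : tequiv I x y -> hle I x w -> hle I y w.
Proof. by move=> Hxy [z H]; exists z; apply: te_trans H (te_catr z Hxy). Qed.

Lemma hle_tew x w w' : tequiv I w w' -> hle I x w -> hle I x w'.
Proof. by move=> H [z H']; exists z; apply: te_trans (te_sym H) H'. Qed.

Lemma hle_cat x w t : hle I x w -> hle I x (w ++ t).
Proof. by case=> z H; exists (z ++ t); rewrite catA; apply: te_catr. Qed.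

End Trace.
Section Bd.
Variable S : finType.
Variable I : rel S.
Hypothesis hsym : symmetric I.
Hypothesis hirr : irreflexive I.

Definition pis (c : {set S}) := [forall a in c, forall b in c, (a != b) ==> I a b].

Lemma pis_pind c : pis c -> pind I (enum c).
Proof.
move=> /forall_inP H x y; rewrite !mem_enum => xc yc xy.
by move: (H x xc) => /forall_inP /(_ y yc) /implyP; apply.
Qed.

Lemma clique_pis c : is_clique I c -> pis c.
Proof. by case/andP. Qed.

Definition X (xi : Bnd I) n := proj1_sig xi n.

Lemma Xok (xi : Bnd I) n : is_clique I (X xi n) /\ arrow I (X xi n) (X xi n.+1).
Proof. exact: (proj2_sig xi n). Qed.

Lemma bprefixS (xi : Bnd I) n : bprefix xi n.+1 = bprefix xi n ++ enum (X xi n).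
Proof. by rewrite /bprefix -addn1 iotaD map_cat flatten_cat /= cats0. Qed.

Lemma bprefix1 (xi : Bnd I) : bprefix xi 1 = enum (X xi 0).
Proof. by rewrite bprefixS. Qed.

Lemma up1 a (xi : Bnd I) : Defs.up [:: a] xi <-> a \in X xi 0.
Proof.
split; last first.
  move=> Ha; exists 1; apply/hle1 => //; rewrite bprefix1.
  apply: (fr_pind hirr); first by rewrite mem_enum.
  move=> x; rewrite mem_enum => xX xa.
  have := pis_pind (clique_pis (proj1 (Xok xi 0))).
  by move=> /(_ a x); apply; rewrite ?mem_enum // eq_sym.
case=> n /hle1 -/(_ hsym hirr).
elim: n => [|n IH] //.
rewrite bprefixS fr_cat; case: ifP => [_|Hn]; first exact: IH.
move=> /fr_mem; rewrite mem_enum.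
case: n IH Hn => [|m] // IH Hn Ha.
have /forall_inP /(_ a Ha) /exists_inP [c cX Hca] := proj2 (Xok xi m).
have Hc : has (fun c => ~~ I a c) (bprefix xi m.+1).
  by apply/hasP; exists c; [rewrite bprefixS mem_cat mem_enum cX orbT | rewrite hsym].
by rewrite Hc in Hn.
Qed.

Lemma up_set d (xi : Bnd I) : pis d -> (Defs.up (enum d) xi <-> d \subset X xi 0).
Proof.
move=> pd; split.
  case=> n H; apply/subsetP => a ad; apply/up1; exists n.
  have Hp : tequiv I (enum d) (a :: rem a (enum d)).
    apply: (te_perm hsym) => //; first exact: enum_uniq.
      exact: pis_pind.
    by apply: perm_to_rem; rewrite mem_enum.
  case: (hle_te Hp H) => z Hz; exists (rem a (enum d) ++ z); exact: Hz.
move=> sub; exists 1; rewrite bprefix1.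
exists (enum (X xi 0 :\: d)); apply: (te_perm hsym) => //.
- exact: enum_uniq.
- exact: (pis_pind (clique_pis (proj1 (Xok xi 0)))).
- apply: uniq_perm; rewrite ?enum_uniq //.
    rewrite cat_uniq !enum_uniq /= andbT; apply/hasPn => x.
    by rewrite !mem_enum in_setD => /andP[].
  move=> x; rewrite mem_cat !mem_enum in_setD.
  by case xd: (x \in d) => //=; rewrite (subsetP sub x xd).
Qed.

End Bd.
Section Pos.
Variable S : finType.
Variable I : rel S.
Hypothesis hsym : symmetric I.
Hypothesis hirr : irreflexive I.

Lemma good_word a : (forall b, connect (fun x y => ~~ I x y) a b) ->
  exists x : seq S, (forall b, b \in x) /\ (forall c, c != a -> fr I c x = false).
Proof.
move=> hconn.
have ex b : exists p, path (fun x y => ~~ I x y) a p && (b == last a p).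
  by case/connectP: (hconn b) => p Hp ->; exists p; rewrite Hp eqxx.
pose pth b := xchoose (ex b).
exists (flatten [seq a :: pth b | b <- enum S]); split.
  move=> b; apply/flattenP; exists (a :: pth b); first by apply: map_f; rewrite mem_enum.
  by case/andP: (xchooseP (ex b)) => _ /eqP Hb; rewrite {1}Hb; apply: mem_last.
move=> c ca; elim: (enum S) => [|b s IH] //=.
rewrite -cat_cons fr_cat; case: ifP => // _.
apply: (fr_path hsym); first by rewrite eq_sym.
by case/andP: (xchooseP (ex b)).
Qed.

Lemma bprefix_le (xi : Bnd I) n m : (n <= m)%N -> exists t, bprefix xi m = bprefix xi n ++ t.
Proof.
elim: m => [|m IH]; first by rewrite leqn0 => /eqP ->; exists [::]; rewrite cats0.
rewrite leq_eqVlt => /orP[/eqP ->|]; first by exists [::]; rewrite cats0.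
by case/IH => t Ht; exists (t ++ enum (X xi m)); rewrite bprefixS Ht catA.
Qed.

Lemma up_mono (xi : Bnd I) x n m : (n <= m)%N -> hle I x (bprefix xi n) -> hle I x (bprefix xi m).
Proof. by case/(bprefix_le xi) => t ->; apply: hle_cat. Qed.

Lemma good_up a x (xi : Bnd I) : (forall b, b \in x) -> (forall c, c != a -> fr I c x = false) ->
  Defs.up x xi -> X xi 0 = [set a].
Proof.
move=> Hx Hc [n2 H2].
have sub : X xi 0 \subset [set a].
  apply/subsetP => b bX; rewrite in_set1.
  have /(up1 hsym hirr) [n1 H1] := bX.
  have H1' := up_mono (leq_addr n2 n1) H1.
  have [z Hz] := up_mono (leq_addl n1 n2) H2.
  have /hle1 := H1'; move=> /(_ hsym hirr); rewrite (fr_te hsym b Hz) fr_cat.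
  have -> : has (fun c => ~~ I b c) x by apply/hasP; exists b; rewrite ?hirr.
  by apply: contraLR => /Hc ->.
have ne : X xi 0 != set0 by case/andP: (proj1 (Xok xi 0)).
apply/eqP; rewrite eqEsubset sub /=; apply/subsetP => b; rewrite in_set1 => /eqP ->.
case/set0Pn: ne => c cX; by move/subsetP: sub => /(_ c cX); rewrite in_set1 => /eqP <-.
Qed.

End Pos.
Section Meas.
Variable S : finType.
Variable I : rel S.
Hypothesis hsym : symmetric I.
Hypothesis hirr : irreflexive I.
Variable P : (Bnd I -> Prop) -> R.
Hypothesis hP : is_probability P.
Local Open Scope R_scope.

Lemma meas_True : meas I (fun _ => True).
Proof.
apply: m_ext (m_up I [::]) _ => xi; split=> // _.
by exists 0%N; exists (bprefix xi 0); apply: te_refl.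
Qed.

Lemma meas_False : meas I (fun _ => False).
Proof. by apply: m_ext (m_compl meas_True) _ => xi; split. Qed.

Lemma meas_or A B : meas I A -> meas I B -> meas I (fun xi => A xi \/ B xi).
Proof.
move=> mA mB.
apply: m_ext (m_union (A := fun n => if n is 0%N then A else B) _) _.
  by case.
move=> xi; split; first by case=> [[|n]] H; [left|right].
by case=> H; [exists 0%N|exists 1%N].
Qed.

Lemma meas_and A B : meas I A -> meas I B -> meas I (fun xi => A xi /\ B xi).
Proof.
move=> mA mB.
apply: m_ext (m_compl (meas_or (m_compl mA) (m_compl mB))) _ => xi.
split; last by case=> a b [].
by move=> H; split; apply: NNPP => H'; apply: H; [left|right].
Qed.

Lemma meas_exlist (T : eqType) (s : seq T) (E : T -> Bnd I -> Prop) :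
  (forall t, meas I (E t)) -> meas I (fun xi => exists t, t \in s /\ E t xi).
Proof.
move=> mE; elim: s => [|t s IH].
  by apply: m_ext meas_False _ => xi; split=> // [[t []]].
apply: m_ext (meas_or (mE t) IH) _ => xi; split.
  by case=> [H|[u [us Hu]]]; [exists t; rewrite mem_head | exists u; rewrite inE us orbT].
by case=> u []; rewrite inE => /orP[/eqP -> H|us H]; [left|right; exists u].
Qed.

Lemma meas_alllist (T : eqType) (s : seq T) (E : T -> Bnd I -> Prop) :
  (forall t, meas I (E t)) -> meas I (fun xi => forall t, t \in s -> E t xi).
Proof.
move=> mE; elim: s => [|t s IH].
  by apply: m_ext meas_True _ => xi; split.
apply: m_ext (meas_and (mE t) IH) _ => xi; split.
  by case=> H1 H2 u; rewrite inE => /orP[/eqP ->|]; [|apply: H2].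
by move=> H; split=> [|u us]; apply: H; rewrite inE ?eqxx ?us ?orbT.
Qed.

Lemma sum_ev_const (s : nat -> R) l L N :
  (forall n, (n >= N)%nat -> sum_f_R0 s n = L) -> infinite_sum s l -> l = L.
Proof.
move=> HL Hs; apply: NNPP => Hne.
have Hp : 0 < Rabs (L - l) by apply: Rabs_pos_lt; move=> E; apply: Hne; lra.
case: (Hs _ Hp) => N' HN.
have := HN (maxn N N') (leP (leq_maxr _ _)).
rewrite HL ?leq_maxl // /R_dist; lra.
Qed.

Lemma P_False : P (fun _ => False) = 0.
Proof.
have H := pr_sigma hP (A := fun _ _ => False) (fun _ => meas_False) (fun _ _ _ _ f _ => f).
have E : P (fun _ => exists n : nat, False) = P (fun _ => False).
  apply: (pr_ext hP); first exact: m_union (fun _ => meas_False).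
  by move=> xi; split=> // [[]].
rewrite E in H.
have c0 := pr_nonneg hP meas_False.
set c := P (fun _ => False) in H c0 *.
case: (Rle_lt_or_eq_dec _ _ c0) => // cpos.
case: (H _ cpos) => N HN.
have := HN N.+1 (leP (leqnSn _)).
rewrite sum_cte /R_dist S_INR S_INR.
have := pos_INR N => HN0 Hlt; exfalso.
have := Rmult_le_pos _ _ HN0 c0.
move: Hlt; rewrite Rabs_right; nra.
Qed.

Lemma P_add A B : meas I A -> meas I B -> (forall xi, A xi -> B xi -> False) ->
  P (fun xi => A xi \/ B xi) = P A + P B.
Proof.
move=> mA mB dis.
pose A' n := match n with 0%N => A | 1%N => B | _ => fun _ : Bnd I => False end.
have mA' : forall n, meas I (A' n) by case=> [|[|n]] //; exact: meas_False.
have dA : forall n m xi, n <> m -> A' n xi -> A' m xi -> False.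
  by case=> [|[|n]] [|[|m]] xi //= ? H1 H2; apply: (dis xi).
have H := pr_sigma hP mA' dA.
have E : P (fun xi => exists n : nat, A' n xi) = P (fun xi => A xi \/ B xi).
  apply: (pr_ext hP); first exact: m_union mA'.
  by move=> xi; split; [case=> [[|[|n]]] //=; [left|right] | case=> H'; [exists 0%N|exists 1%N]].
rewrite E in H.
apply: (sum_ev_const (N:=1%N)) H => n; case: n => // n _.
elim: n => [|n IH]; first by [].
rewrite tech5 IH; have -> : P (A' n.+2) = 0 by exact: P_False.
lra.
Qed.

Lemma P_mono A B : meas I A -> meas I B -> (forall xi, A xi -> B xi) -> P A <= P B.
Proof.
move=> mA mB sub.
have mD : meas I (fun xi => B xi /\ ~ A xi) by apply: meas_and => //; apply: m_compl.
rewrite (pr_ext hP (A := B) (B := fun xi => A xi \/ (B xi /\ ~ A xi))) //.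
  rewrite P_add //; last by move=> xi ? [].
  by have := pr_nonneg hP mD; lra.
move=> xi; split; last by case=> [/sub|[]].
by move=> Bx; case: (classic (A xi)) => H; [left|right].
Qed.

End Meas.
Section Ev.
Variable S : finType.
Variable I : rel S.
Hypothesis hsym : symmetric I.
Hypothesis hirr : irreflexive I.
Variable P : (Bnd I -> Prop) -> R.
Hypothesis hP : is_probability P.

Lemma P_False' : P (fun _ => False) = 0%R.
Proof. exact: (P_False hP). Qed.

Lemma P_list (T : eqType) (s : seq T) (E : T -> Bnd I -> Prop) :
  uniq s -> (forall t, meas I (E t)) -> (forall t u xi, t != u -> E t xi -> E u xi -> False) ->
  P (fun xi => exists t, t \in s /\ E t xi) = (\sum_(t <- s) P (E t))%R.
Proof.
move=> us mE dE; elim: s us => [|t s IH] /=.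
  move=> _; rewrite big_nil -P_False'; apply: (pr_ext hP); last by move=> xi; split=> // [[u []]].
  exact: meas_exlist.
case/andP=> ts us; rewrite big_cons -IH // -RplusE.
rewrite -(P_add hP (mE t) (meas_exlist _ mE)).
  apply: (pr_ext hP); first exact: meas_exlist.
  move=> xi; split.
    by case=> u []; rewrite inE => /orP[/eqP -> H|us' H]; [left|right; exists u].
  by case=> [H|[u [us' Hu]]]; [exists t; rewrite mem_head | exists u; rewrite inE us' orbT].
move=> xi Ht [u [us' Hu]]; apply: (dE t u xi) => //.
by apply/eqP=> Etu; move: ts; rewrite Etu us'.
Qed.

Definition evX (g : {set S}) := fun xi : Bnd I => X xi 0 = g.

Lemma meas_ev g : meas I (evX g).
Proof.
apply: m_ext (@meas_alllist S I S (enum S)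
   (fun a => if a \in g then Defs.up [:: a] else fun xi => ~ Defs.up [:: a] xi) _) _.
  by move=> a; case: (a \in g); [apply: m_up | apply: m_compl; apply: m_up].
move=> xi; split.
  move=> H; apply/setP => a; have := H a; rewrite mem_enum => /(_ isT).
  case: (boolP (a \in g)) => ag.
    by move/(up1 hsym hirr) ->.
  by case: (boolP (a \in X xi 0)) => // aX; case; apply/(up1 hsym hirr).
rewrite /evX => Eg a _; case: ifP => ag.
  by apply/(up1 hsym hirr); rewrite Eg.
by move/(up1 hsym hirr); rewrite Eg ag.
Qed.

Lemma ev_bad g : ~~ is_clique I g -> P (evX g) = 0%R.
Proof.
move=> ng; rewrite -P_False'; apply: (pr_ext hP (meas_ev g)).
move=> xi; split=> // E; move: ng; rewrite -E.
by case: (Xok xi 0) => ->.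
Qed.

Lemma ev_ge0 g : (0 <= P (evX g))%R.
Proof. by apply/RleP; apply: (pr_nonneg hP (meas_ev g)). Qed.

Lemma F1 d : pis I d -> P (Defs.up (enum d)) = (\sum_(g : {set S} | d \subset g) P (evX g))%R.
Proof.
move=> pd.
have -> : (\sum_(g : {set S} | d \subset g) P (evX g))%R =
   (\sum_(g <- enum [pred g : {set S} | d \subset g]) P (evX g))%R.
  by rewrite big_enum.
rewrite -P_list //; first last.
- by move=> t u xi tu Ht Hu; move: tu; rewrite -Ht -Hu eqxx.
- exact: meas_ev.
- exact: enum_uniq.
apply: (pr_ext hP (m_up I _)) => xi; split.
  move/(up_set hsym hirr xi pd) => sub; exists (X xi 0); split=> //.
  by rewrite mem_enum inE.
case=> g []; rewrite mem_enum inE => sub E.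
by apply/(up_set hsym hirr xi pd); rewrite E.
Qed.

Lemma F2 g e : pis I (g :|: e) -> (forall x, x \in g -> x \notin e) ->
  (forall x y : seq S, P (Defs.up (x ++ y)) = (P (Defs.up x) * P (Defs.up y))%R) ->
  P (Defs.up (enum (g :|: e))) = (P (Defs.up (enum g)) * P (Defs.up (enum e)))%R.
Proof.
move=> pge dis hmul; rewrite -hmul.
have Ht : tequiv I (enum (g :|: e)) (enum g ++ enum e).
  apply: (te_perm hsym); first exact: enum_uniq.
    exact: pis_pind.
  apply: uniq_perm; rewrite ?enum_uniq //.
    rewrite cat_uniq !enum_uniq /= andbT; apply/hasPn => x.
    by rewrite !mem_enum => xe; apply/negP => /dis; rewrite xe.
  by move=> x; rewrite mem_cat !mem_enum in_setU.
apply: (pr_ext hP (m_up I _)) => xi; split; case=> n H; exists n.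
  exact: hle_te Ht H.
exact: hle_te (te_sym Ht) H.
Qed.

Lemma ev1_pos a : (forall b, connect (fun x y => ~~ I x y) a b) ->
  (forall x : seq S, Rlt 0 (P (Defs.up x))) -> Rlt 0 (P (evX [set a])).
Proof.
move=> hc hpos.
have [x [Hx Hc]] := good_word hsym hc.
apply: Rlt_le_trans (hpos x) _.
apply: (P_mono hP (m_up I x) (meas_ev _)) => xi.
rewrite /evX; exact: (good_up hsym hirr Hx Hc).
Qed.

End Ev.
Section Alg.
Import GRing.Theory Num.Theory.
Local Open Scope ring_scope.
Variable S : finType.
Variable I : rel S.
Hypothesis hsym : symmetric I.
Hypothesis hirr : irreflexive I.

Lemma swap_sum (F : {set S} -> {set S} -> R) (C : {set S} -> {set S} -> bool) :
  \sum_(g : {set S}) \sum_(e : {set S} | C g e) F g e =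
  \sum_(e : {set S}) \sum_(g : {set S} | C g e) F g e.
Proof.
rewrite (eq_bigr (fun g : {set S} => \sum_(e : {set S}) (if C g e then F g e else 0))); last first.
  by move=> g _; rewrite big_mkcond.
rewrite exchange_big; apply: eq_bigr => e _; by rewrite [RHS]big_mkcond.
Qed.

Definition tog (t : S) (e : {set S}) := if t \in e then e :\ t else t |: e.

Lemma togK t : involutive (tog t).
Proof.
move=> e; rewrite /tog; case: (boolP (t \in e)) => te.
  by rewrite !inE eqxx /= setD1K.
by rewrite !inE eqxx /= setU1K.
Qed.

Lemma alt (T : {set S}) :
  \sum_(e : {set S} | e \subset T) (-1) ^+ #|e| = (T == set0)%:R :> R.
Proof.
case: (set_0Vmem T) => [->|[t tT]].
  rewrite (eq_bigl (pred1 set0)); last by move=> e; rewrite /= subset0.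
  by rewrite big_pred1_eq cards0 expr0 eqxx.
have -> : (T == set0) = false by apply/negbTE/set0Pn; exists t.
set X := \sum_(e | _) _.
have HX : X = - X.
  rewrite {1}/X (reindex_inj (can_inj (togK t))) /= /X -sumrN.
  apply: eq_big => e.
    rewrite /tog; case: (boolP (t \in e)) => te.
      apply/idP/idP => H; first by rewrite -(setD1K te) subUset sub1set tT H.
      exact: subset_trans (subD1set e t) H.
    by rewrite subUset sub1set tT.
  move=> _; rewrite /tog; case: (boolP (t \in e)) => te.
    by rewrite [in RHS](cardsD1 t e) te exprD expr1 mulN1r opprK.
  by rewrite cardsU1 te exprD expr1 mulN1r.
have : X + X = 0 by rewrite {1}HX addNr.
rewrite -mulr2n => /eqP; rewrite mulrn_eq0 /= => /eqP ->.
by [].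
Qed.

Definition Dep (g : {set S}) := [set b | [exists a in g, ~~ I a b]].
Definition Ind (g : {set S}) := ~: Dep g.

Lemma arrowE g c : arrow I g c = (c \subset Dep g).
Proof.
apply/forall_inP/subsetP => H b bc; first by rewrite inE; apply: H.
by have := H b bc; rewrite inE.
Qed.

Lemma arrow_ind g c : arrow I g c = (c :&: Ind g == set0).
Proof.
by rewrite arrowE /Ind -setDE setD_eq0.
Qed.

Variables (h f : {set S} -> R).
Hypothesis hbad : forall g, ~~ is_clique I g -> h g = 0.
Hypothesis hF1 : forall d, pis I d -> f d = \sum_(g : {set S} | d \subset g) h g.
Hypothesis hF2 : forall g e, pis I (g :|: e) -> (forall x, x \in g -> x \notin e) ->
   f (g :|: e) = f g * f e.

Definition Fz (e : {set S}) := \sum_(g : {set S} | e \subset g) h g.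
Definition G (c : {set S}) := \sum_(g : {set S} | arrow I c g) h g.

Lemma pis_sub (e g : {set S}) : e \subset g -> pis I g -> pis I e.
Proof.
move=> /subsetP sub /forall_inP H; apply/forall_inP => a ae; apply/forall_inP => b be.
by have /forall_inP := H a (sub a ae); apply; apply: sub.
Qed.

Lemma Fz_bad e : ~~ pis I e -> Fz e = 0.
Proof.
move=> ne; rewrite /Fz big1 // => g eg; apply: hbad.
by apply: contra ne => /andP[_ pg]; apply: pis_sub eg pg.
Qed.

Lemma stepA c : G c = \sum_(e : {set S} | e \subset Ind c) (-1) ^+ #|e| * Fz e.
Proof.
rewrite /G big_mkcond /=.
rewrite (eq_bigr (fun g : {set S} => \sum_(e : {set S} | (e \subset g) && (e \subset Ind c)) h g * (-1) ^+ #|e|)); last first.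
  move=> g _; rewrite -big_distrr /= (eq_bigl (fun e : {set S} => e \subset g :&: Ind c)); last by move=> e; rewrite subsetI.
  by rewrite alt -arrow_ind; case: ifP; rewrite ?mulr1 ?mulr0.
rewrite swap_sum [RHS]big_mkcond /=; apply: eq_bigr => e _.
case: (boolP (e \subset Ind c)) => ei.
  rewrite /Fz big_distrr /=; apply: eq_big => [g|g _]; first by rewrite ?ei andbT.
  by rewrite mulrC.
by rewrite big_pred0 // => g; rewrite ?(negbTE ei) andbF.
Qed.

Lemma pis_clique (c : {set S}) : is_clique I c -> pis I c.
Proof. by case/andP. Qed.

Lemma Dep_self (c : {set S}) a : a \in c -> a \in Dep c.
Proof. by move=> ac; rewrite inE; apply/exists_inP; exists a; rewrite ?hirr. Qed.

Lemma stepB (c : {set S}) : is_clique I c ->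
  h c = \sum_(e : {set S} | e \subset Ind c) (-1) ^+ #|e| * Fz (c :|: e).
Proof.
move=> cc.
rewrite big_mkcond /=.
rewrite (eq_bigr (fun e : {set S} => \sum_(g : {set S} | (c :|: e \subset g) && (e \subset Ind c)) (-1) ^+ #|e| * h g)); last first.
  move=> e _; case: ifP => ei.
    by rewrite /Fz big_distrr /=; apply: eq_bigl => g; rewrite ?ei andbT.
  by rewrite big_pred0 // => g; rewrite andbF.
rewrite -swap_sum.
rewrite (eq_bigr (fun g : {set S} => h g * ((c \subset g) && (g :&: Ind c == set0))%:R)); last first.
  move=> g _; case: (boolP (c \subset g)) => cg /=.
    rewrite -alt big_distrr /=; apply: eq_big => [e|e _]; last by rewrite mulrC.
    by rewrite subUset cg /= subsetI.
  rewrite mulr0 big_pred0 // => e; rewrite subUset.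
  by case: (c \subset g) cg.
rewrite (bigD1 c) //= subxx /=.
have -> : c :&: Ind c == set0.
  apply/eqP/setP => a; rewrite !inE; apply/negbTE; rewrite negb_and negbK.
  by case: (boolP (a \in c)) => // ac; move: (Dep_self ac); rewrite inE => ->.
rewrite mulr1 big1 ?addr0 // => g gc.
case: (boolP (is_clique I g)) => gcl; last by rewrite hbad // mul0r.
case: (boolP ((c \subset g) && (g :&: Ind c == set0))) => H; last by rewrite mulr0.
case/andP: H => cg /eqP gi.
exfalso; move/eqP: gc; apply; apply/eqP; rewrite eqEsubset cg andbT.
apply/subsetP => b bg; apply: contraT => bc.
have : b \in g :&: Ind c.
  rewrite inE bg /= inE inE; apply/negP => /exists_inP [a ac Hab].
  move: (pis_clique gcl) => /forall_inP /(_ a (subsetP cg a ac)) /forall_inP /(_ b bg).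
  have -> : a != b by apply: contraNneq bc => <-.
  by rewrite (negbTE Hab).
by rewrite gi inE.
Qed.

Lemma stepC (c e : {set S}) : is_clique I c -> e \subset Ind c -> Fz (c :|: e) = f c * Fz e.
Proof.
move=> cc ei.
case: (boolP (pis I e)) => pe; last first.
  rewrite !Fz_bad ?mulr0 //; apply: contra pe; apply: pis_sub; exact: subsetUr.
have dis : forall x, x \in c -> x \notin e.
  move=> x xc; apply/negP => /(subsetP ei); rewrite inE (Dep_self xc) //.
have indep : forall x y, x \in c -> y \in e -> I x y.
  move=> x y xc /(subsetP ei); rewrite !inE => /exists_inP H; apply: negbNE; apply/negP => Hn.
  by apply: H; exists x.
have pce : pis I (c :|: e).
  apply/forall_inP => x; rewrite inE => /orP[xc|xe]; apply/forall_inP => y; rewrite inE => /orP[yc|ye]; apply/implyP => xy.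
  - by move: (pis_clique cc) => /forall_inP /(_ x xc) /forall_inP /(_ y yc) /implyP; apply.
  - exact: indep.
  - by rewrite hsym; apply: indep.
  - by move: pe => /forall_inP /(_ x xe) /forall_inP /(_ y ye) /implyP; apply.
by rewrite /Fz -hF1 // hF2 // -hF1.
Qed.

Lemma hfG (c : {set S}) : is_clique I c -> h c = f c * G c.
Proof.
move=> cc; rewrite (stepB cc) stepA big_distrr /=; apply: eq_bigr => e ei.
by rewrite (stepC cc ei) mulrCA.
Qed.

End Alg.
Lemma CmodE z : Cmod z = Complex.Cmod z.
Proof. by rewrite /Cmod /Complex.Cmod; f_equal; simpl; ring. Qed.

Lemma Cmod_scale r z : Cmod (Cscale r z) = Rmult (Rabs r) (Cmod z).
Proof.
rewrite /Cmod /Cscale /= -sqrt_Rsqr_abs -sqrt_mult_alt; last by apply: Rle_0_sqr.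
by f_equal; rewrite /Rsqr; ring.
Qed.

Lemma Cmod_sum (T : Type) (s : seq T) (b : T -> R) (v : T -> Cx) :
  (forall x, Rle 0 (b x)) ->
  Rle (Cmod (foldr Cadd C0 [seq Cscale (b x) (v x) | x <- s]))
      (\sum_(x <- s) Rmult (b x) (Cmod (v x)))%R.
Proof.
move=> hb; elim: s => [|x s IH] /=.
  rewrite big_nil /Cmod /C0 /=; rewrite Rmult_0_l Rplus_0_l sqrt_0; exact: Rle_refl.
rewrite big_cons -RplusE.
apply: Rle_trans (_ : Rle _ (Rplus (Cmod (Cscale (b x) (v x))) (Cmod (foldr Cadd C0 [seq Cscale (b x) (v x) | x <- s])))) _.
  rewrite !CmodE; exact: Complex.Cmod_triangle.
rewrite Cmod_scale Rabs_right; last by apply: Rle_ge.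
exact: Rplus_le_compat_l.
Qed.

Lemma exists_max (T : eqType) (r : T -> R) (y : T) (s : seq T) :
  exists2 c, c \in y :: s & forall c', c' \in y :: s -> Rle (r c') (r c).
Proof.
elim: s y => [|z s IH] y.
  by exists y; rewrite ?mem_head // => c'; rewrite inE => /eqP ->; apply: Rle_refl.
case: (IH z) => c cin Hc.
case: (Rle_dec (r y) (r c)) => Hyc.
  exists c; first by rewrite inE cin orbT.
  by move=> c'; rewrite inE => /orP[/eqP ->|/Hc].
exists y; first exact: mem_head.
move=> c'; rewrite inE => /orP[/eqP ->|/Hc H]; first exact: Rle_refl.
by apply: Rle_trans H _; apply: Rlt_le; apply: Rnot_le_lt.
Qed.

Section Final.
Variable S : finType.
Variable I : rel S.
Hypothesis hsym : symmetric I.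
Hypothesis hirr : irreflexive I.
Hypothesis hconn : forall a b : S, connect (fun x y => ~~ I x y) a b.
Variable P : (Bnd I -> Prop) -> R.
Hypothesis hprob : is_probability P.
Hypothesis hmul : forall x y : seq S, P (Defs.up (x ++ y)) = (P (Defs.up x) * P (Defs.up y))%R.
Hypothesis hpos : forall x : seq S, Rlt 0 (P (Defs.up x)).

Definition GG c := G I (fun g => P (evX g)) c.

Lemma hfG' c : is_clique I c -> P (evX c) = (P (Defs.up (enum c)) * GG c)%R.
Proof.
apply: (hfG hsym hirr (h := fun g => P (evX g)) (f := fun g => P (Defs.up (enum g)))).
- exact: (ev_bad hsym hirr hprob).
- exact: (F1 hsym hirr hprob).
- by move=> g e pge dis; apply: (F2 hsym hprob pge dis hmul).
Qed.

Lemma GG_pos c : is_clique I c -> Rlt 0 (GG c).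
Proof.
move=> cc; case/andP: (cc) => /set0Pn [a ac] _.
have ar : arrow I c [set a].
  by apply/forall_inP => b; rewrite in_set1 => /eqP ->; apply/exists_inP; exists a; rewrite ?hirr.
rewrite /GG /G (bigD1 [set a]) //=.
have H1 := ev1_pos hsym hirr hprob (hconn a) hpos.
have H2 : (0 <= \sum_(i | arrow I c i && (i != [set a])) P (evX i))%R.
  by apply: Num.Theory.sumr_ge0 => g _; apply: (ev_ge0 hsym hirr hprob).
move/RleP: H2 => H2; rewrite -RplusE.
apply: Rlt_le_trans H1 _; rewrite -{1}(Rplus_0_r (P _)); exact: Rplus_le_compat_l H2.
Qed.

Lemma eigenG c : is_clique I c ->
  (\sum_(c' <- cliques I) Rmult (Bmat P c c') (GG c'))%R = GG c.
Proof.
move=> cc.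
rewrite /cliques big_filter big_enum_cond /=.
rewrite big_mkcond /GG /G [RHS]big_mkcond /=; apply: eq_bigr => c' _.
rewrite /Bmat /clique_word.
case: (boolP (is_clique I c')) => ccl; case: (boolP (arrow I c c')) => ar /=.
- by rewrite (hfG' ccl).
- exact: Rmult_0_l.
- by rewrite (ev_bad hsym hirr hprob ccl).
- by [].
Qed.

Lemma ub lam v : (exists c, is_clique I c /\ v c <> C0) ->
  (forall c, is_clique I c ->
     foldr Cadd C0 [seq Cscale (Bmat P c c') (v c') | c' <- cliques I] = Cmul lam (v c)) ->
  Rle (Cmod lam) 1.
Proof.
case=> c1 [cc1 vne] Heq.
have inC c : (c \in cliques I) = is_clique I c by rewrite /cliques mem_filter mem_enum andbT.
pose r c := Rdiv (Cmod (v c)) (GG c).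
have [c0 c0in Hmax] := exists_max r c1 (cliques I).
have cc0 : is_clique I c0 by move: c0in; rewrite inE => /orP[/eqP ->|]; [|rewrite inC].
have Gpos := GG_pos.
have vpos1 : Rlt 0 (Cmod (v c1)).
  case: (Rle_lt_or_eq_dec _ _ (Complex.Cmod_ge_0 (v c1))) => [|E]; first by rewrite CmodE.
  by exfalso; apply: vne; rewrite (Complex.Cmod_eq_0 (v c1) (esym E)).
have r1 : Rlt 0 (r c1) by apply: Rdiv_lt_0_compat; [exact: vpos1 | exact: Gpos].
have rm : Rle (r c1) (r c0) by apply: Hmax; exact: mem_head.
have bpos : forall x, Rle 0 (Bmat P c0 x).
  by move=> x; rewrite /Bmat; case: ifP => _; [apply: Rlt_le; apply: hpos | apply: Rle_refl].
have bound c' : c' \in cliques I -> Rle (Cmod (v c')) (Rmult (r c0) (GG c')).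
  move=> cin; have cc' : is_clique I c' by rewrite -inC.
  have H : Rle (r c') (r c0) by apply: Hmax; rewrite inE cin orbT.
  have Gp := Gpos c' cc'.
  have -> : Cmod (v c') = Rmult (r c') (GG c') by rewrite /r; field; lra.
  by apply: Rmult_le_compat_r; lra.
have G0 := Gpos c0 cc0.
have v0 : Cmod (v c0) = Rmult (r c0) (GG c0) by rewrite /r; field; lra.
have key : Rle (Rmult (Cmod lam) (Cmod (v c0))) (Cmod (v c0)).
  have -> : Rmult (Cmod lam) (Cmod (v c0)) = Cmod (Cmul lam (v c0)).
    by rewrite !CmodE; symmetry; exact: Complex.Cmod_mult.
  rewrite -(Heq c0 cc0).
  apply: Rle_trans (Cmod_sum _ _ bpos) _.
  rewrite v0 -(eigenG cc0).
  have E2 : Rmult (r c0) (\sum_(c' <- cliques I) Rmult (Bmat P c0 c') (GG c'))%R =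
     (\sum_(x <- cliques I) Rmult (Bmat P c0 x) (Rmult (r c0) (GG x)))%R.
    by rewrite RmultE big_distrr; apply: eq_bigr => x _; rewrite /= -!RmultE; ring.
  rewrite E2; apply/RleP; rewrite big_seq [X in (_ <= X)%R]big_seq.
  apply: Num.Theory.ler_sum => x xin; apply/RleP; apply: Rmult_le_compat_l (bpos x) (bound x xin).
have vc0 : Rlt 0 (Cmod (v c0)) by rewrite v0; apply: Rmult_lt_0_compat; lra.
apply: (Rmult_le_reg_r (Cmod (v c0))) => //; lra.
Qed.

End Final.

Lemma foldr_C (T : Type) (s : seq T) (F : T -> Cx) :
  foldr Cadd C0 (map F s) = ((\sum_(x <- s) (F x).1)%R, (\sum_(x <- s) (F x).2)%R).
Proof.
elim: s => [|x s IH] /=; first by rewrite !big_nil.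
by rewrite IH !big_cons.
Qed.

Theorem lemma4 (S : finType) (I : rel S)
  (hS : (1 < #|S|)%N) (hsym : symmetric I) (hirr : irreflexive I)
  (hconn : forall a b : S, connect (fun x y => ~~ I x y) a b)
  (P : (Bnd I -> Prop) -> R) (hP : @bernoulli S I P) :
  @spectral_radius_is S I (@Bmat S I P) R1.
Proof.
case: hP => hprob [hmul hpos].
case/card_gt0P: (ltnW hS) => a _.
have cla : is_clique I [set a].
  apply/andP; split; first by apply/set0Pn; exists a; rewrite in_set1.
  apply/forall_inP => x; rewrite in_set1 => /eqP ->; apply/forall_inP => y.
  by rewrite in_set1 => /eqP ->; rewrite eqxx.
split.
  move=> t [lam [[v [Hne Heq]] ->]].
  exact: (ub hsym hirr hconn hprob hmul hpos Hne Heq).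
move=> b Hb; apply: Hb; exists (R1, R0); split; last first.
  by rewrite /Cmod /= Rmult_1_l Rmult_0_l Rplus_0_r sqrt_1.
exists (fun c => (GG P c, R0)); split.
  exists [set a]; split; first done.
  move=> [E].
  by have := GG_pos hsym hirr hconn hprob hpos cla; rewrite E; lra.
move=> c cc; rewrite foldr_C /Cmul /=; congr (_, _).
  by rewrite (eigenG hsym hirr hprob hmul cc) Rmult_1_l Rmult_0_l /Rminus Ropp_0 Rplus_0_r.
rewrite big1 => [|x _]; last exact: Rmult_0_r.
by rewrite Rmult_1_l Rmult_0_l Rplus_0_r.
Qed.
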